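(* Let $\epsilon_1,\dots,\epsilon_n$ ($n\ge3$) be directed edges of $\vec\Gamma$ forming a loop, i.e. $t(\epsilon_k)=s(\epsilon_{k+1})$ for $1\le k<n$ and $t(\epsilon_n)=s(\epsilon_1)$. Then $$\mathrm{Tr}(X_{\epsilon_1}\cdots X_{\epsilon_n})=\frac{1}{\sqrt{\mu(s(\epsilon_n))\mu(t(\epsilon_n))}}\sum_{\substack{1\le j\le n-1,\ \epsilon_j=\epsilon_n^{op}\\ j\notin\{1,n-1\}}}\mathrm{Tr}(X_{\epsilon_1}\cdots X_{\epsilon_{j-1}})\,\mathrm{Tr}(X_{\epsilon_{j+1}}\cdots X_{\epsilon_{n-1}})$$ $$+\ \delta_{\epsilon_{n-1},\epsilon_n^{op}}\sqrt{\tfrac{\mu(s(\epsilon_n))}{\mu(t(\epsilon_n))}}\,\mathrm{Tr}(X_{\epsilon_1}\cdots X_{\epsilon_{n-2}})+\delta_{\epsilon_1,\epsilon_n^{op}}\sqrt{\tfrac{\mu(t(\epsilon_n))}{\mu(s(\epsilon_n))}}\,\mathrm{Tr}(X_{\epsilon_2}\cdots X_{\epsilon_{n-1}}).$$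
   Context: $\Gamma$ is a countable, connected, undirected, locally finite graph (loops and multiple edges allowed) with vertex set $V$, edge set $E$, weighting $\mu:V\to(0,\infty)$. The directed version $\vec\Gamma$ has vertices $V$; each edge $e$ with distinct endpoints $\alpha\neq\beta$ yields directed edges $\epsilon,\epsilon^{op}$ with $s(\epsilon)=t(\epsilon^{op})=\alpha$, $t(\epsilon)=s(\epsilon^{op})=\beta$; each loop $e$ at $\gamma$ yields one directed loop $\epsilon=\epsilon^{op}$. Let $\mathcal C=C_0(V)$ with $p_\alpha$ the indicator of $\alpha$; $\mathcal X$ the Hilbert $\mathcal C$-$\mathcal C$ bimodule spanned by directed edges with $p_\alpha\epsilon=\delta_{s(\epsilon),\alpha}\epsilon$, $\epsilon p_\alpha=\delta_{t(\epsilon),\alpha}\epsilon$, $\langle\epsilon'|\epsilon\rangle=\delta_{\epsilon,\epsilon'}p_{t(\epsilon)}$; $\mathcal F(\mathcal X)=\mathcal C\oplus\bigoplus_{n\ge1}\mathcal X^{\otimes_{\mathcal C}n}$ with creation operators $\ell(\xi)$. For a loop $e$: $X_e=\ell(\epsilon)+\ell(\epsilon)^*$; for $e$ with endpoints $\alpha\ne\beta$: $a_\epsilon=(\mu(\alpha)/\mu(\beta))^{1/4}$, $X_e=a_\epsilon\ell(\epsilon)+a_\epsilon^{-1}\ell(\epsilon^{op})^*+a_\epsilon^{-1}\ell(\epsilon^{op})+a_\epsilon\ell(\epsilon)^*$. For a directed edge $\epsilon$ arising from $e$, $X_\epsilon=p_{s(\epsilon)}X_ep_{t(\epsilon)}$.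 $\mathrm{Tr}=\mathrm{tr}\circ E$, where $E(x)=PxP$ with $P$ the projection of $\mathcal F(\mathcal X)$ onto $\mathcal C$ and $\mathrm{tr}(p_v)=\mu(v)$. Empty products $X_{\epsilon_i}\cdots X_{\epsilon_j}$ (if any arise) are interpreted as the appropriate vertex projection. *)

(* Defs.v *)
From HB Require Import structures.
From mathcomp Require Import all_boot all_order all_algebra.
From mathcomp Require Import reals.
Set Implicit Arguments. Unset Strict Implicit. Unset Printing Implicit Defensive.
Import Order.TTheory GRing.Theory Num.Theory.
Local Open Scope ring_scope.

(* Undirected edges = orbits of op; a loop e yields a single directed loop
   with op d = d, a non-loop yields two distinct directed edges d, op d. *)
Definition directed_graph (V D : eqType) (s t : D -> V) (op : D -> D) : Prop :=
  [/\ forall d, op (op d) = d,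
      forall d, s (op d) = t d &
      forall d, (op d == d) = (s d == t d)].

Definition locally_finite (V D : eqType) (s : D -> V) : Prop :=
  forall v, exists l : seq D, forall d, s d = v -> d \in l.

Fixpoint dpath (V D : eqType) (s t : D -> V) (u : V) (w : seq D) (v : V) : bool :=
  match w with
  | [::] => u == v
  | d :: w' => (s d == u) && dpath s t (t d) w' v
  end.

Definition graph_connected (V D : eqType) (s t : D -> V) : Prop :=
  forall u v, exists w : seq D, dpath s t u w v.

Section Fock.
Variables (R : realType) (V D : eqType) (s t : D -> V) (op : D -> D) (mu : V -> R).

(* Basis of the algebraic Fock space F(X):
   (v, [::])          = p_v  in C = C_0(V)
   (s e1, [:: e1;..;en]) = e1 (x) ... (x) en  (composable, t ei = s e(i+1)). *)
Definition basis := (V * seq D)%type.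
Definition vec := seq (R * basis).
Definition oper := basis -> vec.

Definition vapply (f : oper) (x : vec) : vec :=
  flatten [seq [seq (cb.1 * p.1, p.2) | p <- f cb.2] | cb <- x].

Definition coef (b : basis) (x : vec) : R :=
  \sum_(p <- x) (if p.2 == b then p.1 else 0).

Definition oid : oper := fun b => [:: (1, b)].
Definition oadd (f g : oper) : oper := fun b => f b ++ g b.
Definition oscale (a : R) (f : oper) : oper :=
  fun b => [seq (a * p.1, p.2) | p <- f b].
Definition ocomp (f g : oper) : oper := fun b => vapply f (g b).

Definition proj (a : V) : oper :=
  fun b => if b.1 == a then [:: (1, b)] else [::].

(* creation operator l(e) : xi |-> e (x) xi   (e (x) p_v = delta_{t e, v} e) *)
Definition create (e : D) : oper :=
  fun b => if t e == b.1 then [:: (1, (s e, e :: b.2))] else [::].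

Definition annih (e : D) : oper :=
  fun b => match b.2 with
           | e' :: w => if e == e' then [:: (1, (t e, w))] else [::]
           | [::] => [::]
           end.

Definition acoef (e : D) : R := Num.sqrt (Num.sqrt (mu (s e) / mu (t e))).

(* X_e, written using the directed edge e arising from it *)
Definition Xedge (e : D) : oper :=
  if op e == e then oadd (create e) (annih e)
  else oadd (oadd (oadd (oscale (acoef e) (create e))
                        (oscale (acoef e)^-1 (annih (op e))))
                  (oscale (acoef e)^-1 (create (op e))))
            (oscale (acoef e) (annih e)).

Definition Xdir (e : D) : oper := ocomp (proj (s e)) (ocomp (Xedge e) (proj (t e))).

Definition word_op (w : seq D) : oper := foldr (fun e f => ocomp (Xdir e) f) oid w.

(* E(x) = P x P, as an element of C_0(V): v |-> coefficient of p_v in P x p_v *)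
Definition Ecoef (w : seq D) (v : V) : R := coef (v, [::]) (word_op w (v, [::])).

(* Tr = tr o E with tr(p_v) = mu v.  For a word w, E(X_{w1}...X_{wn}) is
   supported in {s w1}, so the sum over V reduces to the (finite) set of
   source vertices of w. *)
Definition Tr (w : seq D) : R := \sum_(v <- undup (map s w)) mu v * Ecoef w v.

End Fock.

(* the word eps_i, ..., eps_j (indices i..j, empty if j < i) *)
Definition subword (D : Type) (eps : nat -> D) (i j : nat) : seq D :=
  [seq eps k | k <- iota i (j.+1 - i)].

(* Main.v *)
Require Import Defs.
From HB Require Import structures.
From mathcomp Require Import all_boot all_order all_algebra.
From mathcomp Require Import reals ring.
Set Implicit Arguments. Unset Strict Implicit. Unset Printing Implicit Defensive.
Import Order.TTheory GRing.Theory Num.Theory.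
Local Open Scope ring_scope.

Section Lin.
Variables (R : realType) (V D : eqType).
Local Notation basis := (basis V D).
Local Notation vec := (vec R V D).
Local Notation oper := (oper R V D).

Definition equivv (x y : vec) := forall b, coef b x = coef b y.
Definition vscale (c : R) (y : vec) : vec := [seq (c * p.1, p.2) | p <- y].

Lemma coef_nil b : coef b ([::] : vec) = 0.
Proof. by rewrite /coef big_nil. Qed.

Lemma coef_cons b p (x : vec) :
  coef b (p :: x) = (if p.2 == b then p.1 else 0) + coef b x.
Proof. by rewrite /coef big_cons. Qed.

Lemma coef_cat b (x y : vec) : coef b (x ++ y) = coef b x + coef b y.
Proof. by rewrite /coef big_cat. Qed.

Lemma coef1 b c (bb : basis) : coef b ([:: (c, bb)] : vec) = if bb == b then c else 0.
Proof. by rewrite /coef big_cons big_nil addr0. Qed.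

Lemma coef_sel (y : vec) (b0 : basis) (K : R) :
  \sum_(p <- y) p.1 * (if p.2 == b0 then K else 0) = coef b0 y * K.
Proof.
rewrite /coef mulr_suml; apply: eq_bigr => p _.
by case: ifP; rewrite ?mulr0 ?mul0r.
Qed.

Lemma coef_vscale b c (y : vec) : coef b (vscale c y) = c * coef b y.
Proof.
rewrite /coef /vscale big_map mulr_sumr; apply: eq_bigr => p _ /=.
by case: ifP; rewrite ?mulr0.
Qed.

Lemma coef_vapply b (f : oper) (x : vec) :
  coef b (vapply f x) = \sum_(p <- x) p.1 * coef b (f p.2).
Proof.
elim: x => [|q x IH]; first by rewrite /vapply /= coef_nil big_nil.
rewrite big_cons -IH /vapply /= coef_cat.
congr (_ + _); exact: (coef_vscale b q.1 (f q.2)).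
Qed.

Lemma sum_repr (g : basis -> R) (x : vec) (S : seq basis) :
  uniq S -> {subset map snd x <= S} ->
  \sum_(p <- x) p.1 * g p.2 = \sum_(b <- S) coef b x * g b.
Proof.
move=> uS; elim: x => [|q x IH] sub.
  by rewrite big_nil big1 // => b _; rewrite coef_nil mul0r.
rewrite big_cons IH; last by move=> y hy; apply: sub; rewrite /= in_cons hy orbT.
under [X in _ = X]eq_bigr => b _ do rewrite coef_cons mulrDl.
rewrite big_split /=; congr (_ + _).
have qS : q.2 \in S by apply: sub; rewrite /= mem_head.
rewrite (bigD1_seq q.2) //= eqxx big1 ?addr0 // => b hb.
by rewrite eq_sym (negbTE hb) mul0r.
Qed.

Lemma sum_equiv (g : basis -> R) (x y : vec) : equivv x y ->
  \sum_(p <- x) p.1 * g p.2 = \sum_(p <- y) p.1 * g p.2.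
Proof.
move=> hxy; set S := undup (map snd (x ++ y)).
have uS : uniq S by apply: undup_uniq.
rewrite (sum_repr g uS (x:=x)); last first.
  by move=> z hz; rewrite mem_undup map_cat mem_cat hz.
rewrite (sum_repr g uS (x:=y)); last first.
  by move=> z hz; rewrite mem_undup map_cat mem_cat hz orbT.
by apply: eq_bigr => b _; rewrite hxy.
Qed.

Lemma equiv_refl (x : vec) : equivv x x. Proof. by []. Qed.
Lemma equiv_sym (x y : vec) : equivv x y -> equivv y x. Proof. by move=> h b. Qed.
Lemma equiv_trans (x y z : vec) : equivv x y -> equivv y z -> equivv x z.
Proof. by move=> h1 h2 b; rewrite h1. Qed.
Lemma equiv_cat (x y x' y' : vec) : equivv x x' -> equivv y y' -> equivv (x ++ y) (x' ++ y').
Proof. by move=> h1 h2 b; rewrite !coef_cat h1 h2. Qed.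

Lemma vapply_equiv (f : oper) (x y : vec) : equivv x y -> equivv (vapply f x) (vapply f y).
Proof. by move=> h b; rewrite !coef_vapply (sum_equiv (fun bb => coef b (f bb)) h). Qed.

Lemma vapply_ext (f g : oper) (x : vec) : (forall b, equivv (f b) (g b)) ->
  equivv (vapply f x) (vapply g x).
Proof. by move=> h b; rewrite !coef_vapply; apply: eq_bigr => p _; rewrite h. Qed.

Lemma vapply_cat (f : oper) (x y : vec) : vapply f (x ++ y) = vapply f x ++ vapply f y.
Proof. by rewrite /vapply map_cat flatten_cat. Qed.

Lemma coef_vapply_vscale b (f : oper) c (x : vec) :
  coef b (vapply f (vscale c x)) = c * coef b (vapply f x).
Proof.
rewrite !coef_vapply /vscale big_map mulr_sumr; apply: eq_bigr => p _ /=.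
by rewrite mulrA.
Qed.

Lemma vapply_assoc (f g : oper) (x : vec) : equivv (vapply f (vapply g x)) (vapply (ocomp f g) x).
Proof.
move=> b; elim: x => [|q x IH]; first by [].
rewrite /= vapply_cat coef_cat IH /ocomp.
rewrite [in RHS]/vapply /= coef_cat; congr (_ + _).
rewrite -/(vapply f _) -/(vscale q.1 (g q.2)) coef_vapply_vscale.
have -> : [seq (q.1 * p.1, p.2) | p <- vapply f (g q.2)] = vscale q.1 (vapply f (g q.2)) by [].
by rewrite coef_vscale.
Qed.

Lemma vapply_oid (x : vec) : equivv (vapply (@oid R V D) x) x.
Proof.
move=> b; rewrite coef_vapply /coef; apply: eq_bigr => p _.
by rewrite /oid big_cons big_nil addr0; case: ifP; rewrite ?mulr1 ?mulr0.
Qed.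

Lemma vapply_single (f : oper) c (bb : basis) : equivv (vapply f [:: (c, bb)]) (vscale c (f bb)).
Proof. by move=> b; rewrite coef_vapply big_cons big_nil addr0 coef_vscale. Qed.

Lemma coef_flatten_scale b (I : Type) (r : seq I) (c : I -> R) (y : I -> vec) :
  coef b (flatten [seq vscale (c i) (y i) | i <- r]) = \sum_(i <- r) c i * coef b (y i).
Proof.
elim: r => [|i r IH]; first by rewrite big_nil coef_nil.
by rewrite /= coef_cat IH big_cons coef_vscale.
Qed.

Lemma coef_vapply_flatten b (f : oper) (I : Type) (r : seq I) (c : I -> R) (y : I -> vec) :
  coef b (vapply f (flatten [seq vscale (c i) (y i) | i <- r])) =
  \sum_(i <- r) c i * coef b (vapply f (y i)).
Proof.
elim: r => [|i r IH]; first by rewrite big_nil /vapply /= coef_nil.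
by rewrite /= vapply_cat coef_cat IH big_cons coef_vapply_vscale.
Qed.

Lemma coef_vapply_proj b a (x : vec) :
  coef b (vapply (proj R a) x) = if b.1 == a then coef b x else 0.
Proof.
rewrite coef_vapply /coef; case: eqP => [ha|ha].
  apply: eq_bigr => p _; rewrite /proj; case: eqP => [hp|hp].
    by rewrite big_cons big_nil addr0; case: ifP; rewrite ?mulr1 ?mulr0.
  rewrite big_nil mulr0; case: eqP => // hpb; by case: hp; rewrite hpb.
rewrite big1 // => p _; rewrite /proj; case: eqP => [hp|]; last by rewrite big_nil mulr0.
rewrite big_cons big_nil addr0; case: eqP => [hpb|]; last by rewrite mulr0.
by case: ha; rewrite -hpb.
Qed.


End Lin.

Section Subword.
Variables (D : Type) (eps : nat -> D).

Lemma subword1 m : subword eps 1 m = map eps (iota 1 m).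
Proof. by rewrite /subword subn1. Qed.

Lemma subword_cons i j : (i <= j)%N -> subword eps i j = eps i :: subword eps i.+1 j.
Proof. by move=> hij; rewrite /subword subSS (subSn hij). Qed.

Lemma subword_nil i j : (j < i)%N -> subword eps i j = [::].
Proof. by move=> hij; rewrite /subword (eqP (_ : j.+1 - i == 0)%N) // subn_eq0. Qed.

Lemma subword_rcons m : subword eps 1 m.+1 = rcons (subword eps 1 m) (eps m.+1).
Proof.
have h := iotaD 1 m 1; rewrite addn1 add1n in h.
by rewrite !subword1 h map_cat -cats1.
Qed.

Lemma size_subword1 m : size (subword eps 1 m) = m.
Proof. by rewrite subword1 size_map size_iota. Qed.

Lemma subword_take m i : (i <= m)%N -> take i (subword eps 1 m) = subword eps 1 i.
Proof. by move=> h; rewrite !subword1 -map_take take_iota (minn_idPl h). Qed.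

Lemma subword_drop m i : (i < m)%N -> drop i.+1 (subword eps 1 m) = subword eps i.+2 m.
Proof. by move=> h; rewrite subword1 -map_drop drop_iota /subword subSS add1n. Qed.

Lemma subword_nth m i d : (i < m)%N -> nth d (subword eps 1 m) i = eps i.+1.
Proof.
by move=> h; rewrite subword1 (nth_map 0%N) ?size_iota // nth_iota // add1n.
Qed.
End Subword.

Lemma alg1 (R : realType) (x y : R) : 0 < x -> 0 < y ->
  (Num.sqrt (x * y))^-1 = Num.sqrt (x / y) / x.
Proof.
move=> hx hy; rewrite !sqrtrM ?(ltW hx) // sqrtrV ?(ltW hy) //.
have hp : Num.sqrt x != 0 by rewrite gt_eqF // sqrtr_gt0.
have hq : Num.sqrt y != 0 by rewrite gt_eqF // sqrtr_gt0.
set p := Num.sqrt x; set q := Num.sqrt y.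
rewrite -(sqr_sqrtr (ltW hx)) -/p; field; by rewrite hp hq.
Qed.

Lemma alg2 (R : realType) (x y : R) : 0 < x -> 0 < y ->
  Num.sqrt (y / x) = Num.sqrt (x / y) * y / x.
Proof.
move=> hx hy; rewrite !sqrtrM ?(ltW hx) ?(ltW hy) // !sqrtrV ?(ltW hx) ?(ltW hy) //.
have hp : Num.sqrt x != 0 by rewrite gt_eqF // sqrtr_gt0.
have hq : Num.sqrt y != 0 by rewrite gt_eqF // sqrtr_gt0.
set p := Num.sqrt x; set q := Num.sqrt y.
rewrite -(sqr_sqrtr (ltW hx)) -(sqr_sqrtr (ltW hy)) -/p -/q; field; by rewrite hp hq.
Qed.

Section Fock.
Variables (R : realType) (V D : eqType) (s t : D -> V) (op : D -> D) (mu : V -> R).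
Hypothesis hG : directed_graph s t op.
Local Notation basis := (basis V D).
Local Notation vec := (vec R V D).
Local Notation oper := (oper R V D).
Local Notation T := (word_op s t op mu).
Local Notation Xd := (Xdir s t op mu).
Local Notation Xe := (Xedge s t op mu).

Lemma hop d : op (op d) = d. Proof. by case: hG. Qed.
Lemma hst d : s (op d) = t d. Proof. by case: hG. Qed.
Lemma hts d : t (op d) = s d. Proof. by rewrite -{2}(hop d) hst. Qed.
Lemma hloopE d : (op d == d) = (s d == t d). Proof. by case: hG. Qed.

Lemma coef_Xdir g x (b : basis) : coef g (Xd x b) =
  if (b.1 == t x) && (g.1 == s x) then coef g (Xe x b) else 0.
Proof.
rewrite /Xdir /ocomp coef_vapply_proj /proj; case: (b.1 == t x) => /=.
  by case: ifP => // _; rewrite vapply_single coef_vscale mul1r.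
by case: ifP => // _; rewrite /vapply /= coef_nil.
Qed.

Lemma Ecoef_nil v : Ecoef s t op mu [::] v = 1.
Proof. by rewrite /Ecoef /= /oid coef_cons eqxx coef_nil addr0. Qed.

Lemma Ecoef_cons x w v : v != s x -> Ecoef s t op mu (x :: w) v = 0.
Proof.
move=> hv; rewrite /Ecoef /= /ocomp coef_vapply big1 // => p _.
by rewrite coef_Xdir /= (negbTE hv) andbF mulr0.
Qed.

Lemma Tr_cons x w : Tr s t op mu (x :: w) = mu (s x) * Ecoef s t op mu (x :: w) (s x).
Proof.
rewrite /Tr (bigD1_seq (s x)); last exact: undup_uniq.
  rewrite /= big1 ?addr0 // => v hv; by rewrite Ecoef_cons // mulr0.
by rewrite mem_undup /= mem_head.
Qed.


Lemma T_rcons w y b : equivv (T (rcons w y) b) (vapply (T w) (Xd y b)).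
Proof.
elim: w b => [|x w IH] b g.
  by rewrite /= vapply_single coef_vscale mul1r vapply_oid.
change (coef g (vapply (Xd x) (T (rcons w y) b)) = coef g (vapply (T (x :: w)) (Xd y b))).
by rewrite (vapply_equiv _ (IH b)) vapply_assoc.
Qed.

Definition ce y : R := if op y == y then 1 else acoef s t mu y.

Lemma Xd_start y : equivv (Xd y (t y, [::])) [:: (ce y, (s y, [:: y]))].
Proof.
move=> g; rewrite coef_Xdir eqxx /= coef1 /ce /Xedge.
case hl: (op y == y); rewrite /oadd /oscale /create /annih /= eqxx.
  rewrite cats0 coef1; case: (eqVneq g (s y, [:: y])) => [->|hne] /=; first by rewrite !eqxx.
  by rewrite if_same.
rewrite hts; have -> : (s y == t y) = false by rewrite -hloopE hl.
rewrite /= coef1 mulr1.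
case: (eqVneq g (s y, [:: y])) => [->|hne] /=; first by rewrite !eqxx.
by rewrite if_same.
Qed.

Section App.
Variable e : D.
Definition app (b : basis) : basis := (b.1, rcons b.2 e).
Definition mapapp (y : vec) : vec := [seq (p.1, app p.2) | p <- y].
Definition compat (f : oper) (E : basis -> vec) :=
  forall b, equivv (f (app b)) (mapapp (f b) ++ E b).

Lemma mapapp_cat x y : mapapp (x ++ y) = mapapp x ++ mapapp y.
Proof. exact: map_cat. Qed.
Lemma mapapp_vscale c y : mapapp (vscale c y) = vscale c (mapapp y).
Proof. by rewrite /mapapp /vscale -!map_comp. Qed.
Lemma mapapp_vapply (f : oper) y : mapapp (vapply f y) = vapply (fun b => mapapp (f b)) y.
Proof.
elim: y => [|p y IH] //.
by rewrite /= mapapp_cat IH -/(vscale p.1 (f p.2)) mapapp_vscale.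
Qed.

Lemma compat_ext f E E' : compat f E -> (forall b, equivv (E b) (E' b)) -> compat f E'.
Proof. by move=> h h' b g; rewrite h !coef_cat h'. Qed.

Lemma compat_create y : compat (create R s t y) (fun _ => [::]).
Proof. by move=> [v u] g; rewrite cats0 /create /=; case: ifP. Qed.

Lemma compat_proj a : compat (proj R a) (fun _ => [::]).
Proof. by move=> [v u] g; rewrite cats0 /proj /=; case: ifP. Qed.

Definition Eann y (b : basis) : vec :=
  if (b.2 == [::]) && (y == e) then [:: (1, (t y, [::]))] else [::].

Lemma compat_annih y : compat (annih R t y) (Eann y).
Proof.
move=> [v [|h u]] g; rewrite /annih /Eann /=; first by case: ifP.
by case: ifP; rewrite cats0.
Qed.

Lemma compat_add f g Ef Eg : compat f Ef -> compat g Eg ->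
  compat (oadd f g) (fun b => Ef b ++ Eg b).
Proof.
move=> hf hg b x; rewrite /oadd coef_cat hf hg mapapp_cat !coef_cat.
by rewrite !addrA; congr (_ + _); rewrite -!addrA; congr (_ + _); rewrite addrC.
Qed.

Lemma compat_scale c f Ef : compat f Ef -> compat (oscale c f) (fun b => vscale c (Ef b)).
Proof.
move=> hf b x; rewrite /oscale -/(vscale c _) coef_vscale hf -/(vscale c (f b)).
by rewrite mapapp_vscale !coef_cat !coef_vscale mulrDr.
Qed.

Lemma vapply_mapapp f Ef y : compat f Ef ->
  equivv (vapply f (mapapp y)) (mapapp (vapply f y) ++ flatten [seq vscale p.1 (Ef p.2) | p <- y]).
Proof.
move=> hf g; rewrite coef_cat coef_flatten_scale mapapp_vapply !coef_vapply.
rewrite /mapapp big_map -big_split /=; apply: eq_bigr => p _.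
by rewrite hf coef_cat mulrDr.
Qed.

Lemma compat_comp f g Ef Eg : compat f Ef -> compat g Eg ->
  compat (ocomp f g) (fun b => flatten [seq vscale p.1 (Ef p.2) | p <- g b] ++ vapply f (Eg b)).
Proof.
move=> hf hg b x; rewrite /ocomp (vapply_equiv f (hg b)) vapply_cat coef_cat.
by rewrite (vapply_mapapp _ hf) !coef_cat addrA.
Qed.

Definition EX x b : vec := if op x == x then Eann x b
  else vscale (acoef s t mu x)^-1 (Eann (op x) b) ++ vscale (acoef s t mu x) (Eann x b).

Lemma compat_Xedge x : compat (Xe x) (EX x).
Proof.
rewrite /Xedge /EX; case: ifP => _.
  apply: compat_ext; first exact: (compat_add (compat_create _) (compat_annih _)).
  by [].
apply: compat_ext.
  exact: (compat_add (compat_add (compat_add (compat_scale _ (compat_create _))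
     (compat_scale _ (compat_annih _))) (compat_scale _ (compat_create _)))
     (compat_scale _ (compat_annih _))).
by move=> b g /=; rewrite !coef_cat [coef g [::]]/coef big_nil addr0.
Qed.

Definition dc x : R := if op x == x then 1 else (acoef s t mu x)^-1.
Definition Ecl x (b : basis) : vec :=
  if (b == (s e, [::])) && (x == op e) then [:: (dc x, (t e, [::]))] else [::].

Lemma compat_Xdir x : compat (Xd x) (Ecl x).
Proof.
apply: compat_ext.
  exact: (compat_comp (compat_proj _) (compat_comp (compat_Xedge x) (compat_proj _))).
move=> [v u] g; rewrite coef_cat coef_flatten_scale big1 ?add0r; last first.
  by move=> p _; rewrite /vscale /= [coef g _]/coef big_nil mulr0.
rewrite coef_vapply_proj coef_cat coef_flatten_scale [vapply _ [::]]/vapply /=.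
rewrite [coef g [::]]/coef big_nil addr0 /proj /=.
have c0 : coef g ([::] : vec) = 0 by rewrite /coef big_nil.
case: (v =P t x) => hv; rewrite ?big_cons ?big_nil ?addr0 /=; last first.
  rewrite if_same /Ecl; case: ifP => [/andP [/eqP [hv' _] /eqP hx]|_].
    by case: hv; rewrite hv' hx hts.
  by rewrite /coef big_nil.
rewrite mul1r; case: u => [|h u]; last first.
  have -> : EX x (v, h :: u) = [::] by rewrite /EX /Eann /=; case: ifP.
  by rewrite /Ecl xpair_eqE /= andbF /= c0; case: ifP.
have cE : forall y, coef g (Eann y (v, [::])) = if (y == e) && ((t y, [::]) == g) then 1 else 0.
  move=> y; rewrite /Eann /=; case: (y == e); last by rewrite c0.
  by rewrite coef_cons c0 addr0.
subst v; case hx: (x == op e); last first.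
  rewrite /Ecl hx andbF [RHS]/coef big_nil.
  case: ifP => // /eqP hg; rewrite /EX; case: ifP => hl.
    rewrite cE; case: ifP => // /andP [/eqP hxe _].
    by move: hx; rewrite -hxe (eqP hl) eqxx.
  rewrite coef_cat !coef_vscale !cE.
  have -> : (op x == e) = false.
    by apply/negbTE; apply/negP => /eqP h; move: hx; rewrite -h hop eqxx.
  rewrite /= mulr0 add0r; case: ifP; last by rewrite mulr0.
  case/andP => _ /eqP hg'; move: hl; rewrite hloopE -hg -hg' /= eqxx //.
move/eqP: hx => hx; subst x; rewrite hts in cE *; rewrite /Ecl !eqxx /= coef_cons [coef g [::]]/coef big_nil addr0.
rewrite /EX /dc hop hst /=.
case: ifP => hg; last first.
  by case: eqP => // hge; move: hg; rewrite -hge eqxx.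
case: ifP => hl.
  rewrite cE eq_sym hl /= hts.
  have hse : s e = t e by apply/eqP; rewrite -hloopE eq_sym.
  by rewrite hse.
rewrite coef_cat !coef_vscale !cE eqxx /= (eq_sym (op e)) hl /= mulr0 addr0.
by case: ifP; rewrite ?mulr1 ?mulr0.
Qed.

Definition cc (w : seq D) b i :=
  (if nth e w i == op e then dc (op e) else 0) * coef (s e, [::]) (T (drop i.+1 w) b).
Definition Fv (w : seq D) b : vec :=
  flatten [seq vscale (cc w b i) (T (take i w) (t e, [::])) | i <- iota 0 (size w)].

Lemma main_app w b : equivv (T w (app b)) (mapapp (T w b) ++ Fv w b).
Proof.
elim: w b => [|x w IH] b g; first by rewrite /Fv /=.
change (coef g (vapply (Xd x) (T w (app b))) =
        coef g (mapapp (vapply (Xd x) (T w b)) ++ Fv (x :: w) b)).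
have -> : Fv (x :: w) b = vscale (cc (x :: w) b 0) (T [::] (t e, [::])) ++
    flatten [seq vscale (cc w b i) (T (x :: take i w) (t e, [::])) | i <- iota 0 (size w)].
  by rewrite /Fv /= -(addn0 1%N) iotaDl -map_comp.
rewrite (vapply_equiv _ (IH b)) vapply_cat coef_cat (vapply_mapapp _ (compat_Xdir x)).
rewrite !coef_cat -addrA; congr (_ + _).
rewrite coef_vscale (coef_flatten_scale g (iota 0 (size w))).
rewrite coef_flatten_scale coef_vapply_flatten; congr (_ + _).
rewrite /cc /= /oid /Ecl; case hx: (x == op e); last first.
  rewrite mul0r mul0r big1 // => p _; by rewrite andbF /coef big_nil mulr0.
have h : forall p : R * basis, p.1 * coef g (if (p.2 == (s e, [::])) && true
    then [:: (dc x, (t e, [::]))] else [::]) =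
    p.1 * (if p.2 == (s e, [::]) then (if (t e, [::]) == g then dc x else 0) else 0).
  by move=> p; rewrite andbT; case: ifP; rewrite ?coef1 // coef_nil.
rewrite drop0 (eq_bigr _ (fun p _ => h p)) coef_sel coef1 (eqP hx).
by case: ifP; rewrite ?mulr1 ?mulr0 // mulrC.
Qed.

Lemma Ecoef_full w : Ecoef s t op mu (rcons w e) (t e) =
  ce e * \sum_(i <- iota 0 (size w)) cc w (s e, [::]) i * Ecoef s t op mu (take i w) (t e).
Proof.
rewrite /Ecoef (T_rcons w e (t e, [::])) (vapply_equiv _ (Xd_start e)) vapply_single coef_vscale.
congr (_ * _); rewrite (main_app w (s e, [::])) coef_cat /Fv coef_flatten_scale.
rewrite [X in X + _](_ : _ = 0) ?add0r //.
rewrite /coef /mapapp big_map big1 // => p _ /=.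
by rewrite /app xpair_eqE; case: (p.2.2) => [|h u]; rewrite andbF.
Qed.

End App.

Lemma hK (hmu : forall v, 0 < mu v) e : ce e * dc (op e) = Num.sqrt (mu (s e) / mu (t e)).
Proof.
rewrite /ce /dc hop; case: ifP => hl.
  rewrite (eq_sym e) hl mulr1.
  have -> : s e = t e by apply/eqP; rewrite -hloopE.
  by rewrite divff ?sqrtr1 // gt_eqF.
rewrite (eq_sym e) hl /acoef hst hts -[mu (t e) / mu (s e)]invf_div.
have h0 : 0 <= mu (s e) / mu (t e) by rewrite divr_ge0 // ltW.
rewrite (sqrtrV h0) (sqrtrV (sqrtr_ge0 _)) invrK -expr2 sqr_sqrtr //.
exact: sqrtr_ge0.
Qed.

Lemma Tr_sub (eps : nat -> D) i j : (i <= j)%N ->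
  Tr s t op mu (subword eps i j) = mu (s (eps i)) * Ecoef s t op mu (subword eps i j) (s (eps i)).
Proof. by move=> h; rewrite (subword_cons eps h) Tr_cons. Qed.

Lemma core (hmu : forall v, 0 < mu v) (k : nat) (eps : nat -> D)
    (hloop : forall j, (1 <= j < k.+3)%N -> t (eps j) = s (eps j.+1))
    (hclose : t (eps k.+3) = s (eps 1%N)) :
  let Tr := Tr s t op mu in
  let a := s (eps k.+3) in
  let b := t (eps k.+3) in
  Tr (subword eps 1 k.+3) =
    (Num.sqrt (mu a * mu b))^-1 *
      \sum_(2 <= j < k.+3.-1 | eps j == op (eps k.+3))
         Tr (subword eps 1 j.-1) * Tr (subword eps j.+1 k.+3.-1)
  + (if eps k.+3.-1 == op (eps k.+3)
     then Num.sqrt (mu a / mu b) * Tr (subword eps 1 k.+3.-2) else 0)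
  + (if eps 1%N == op (eps k.+3)
     then Num.sqrt (mu b / mu a) * Tr (subword eps 2 k.+3.-1) else 0).
Proof.
move=> Tr0 a b; rewrite {}/Tr0 {}/a {}/b.
change (k.+3.-1) with k.+2; change (k.+2.-1) with k.+1.
set e := eps k.+3.
have hb1 : s (eps 1%N) = t e by rewrite hclose.
pose G j := (if eps j == op e then 1 else 0) * Ecoef s t op mu (subword eps j.+1 k.+2) (s e)
   * Ecoef s t op mu (subword eps 1 j.-1) (t e).
rewrite (Tr_sub eps (i := 1) (j := k.+3)) // hb1 subword_rcons Ecoef_full size_subword1 -/e.
have hsum : \sum_(i <- iota 0 k.+2) cc e (subword eps 1 k.+2) (s e, [::]) i *
    Ecoef s t op mu (take i (subword eps 1 k.+2)) (t e) =
    dc (op e) * \sum_(i <- iota 0 k.+2) G i.+1.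
  rewrite mulr_sumr; apply: eq_big_seq => i; rewrite mem_iota add0n => /andP [_ hi].
  rewrite /cc (subword_nth eps (m:=k.+2) (i:=i) e hi) (subword_take eps (ltnW hi)).
  rewrite (subword_drop eps hi) /G succnK.
  case: ifP => _; last by rewrite !mul0r mulr0.
  by rewrite mul1r mulrA.
rewrite hsum [ce e * _]mulrA hK //.
have hio : iota 0 k.+2 = 0%N :: (iota 1 k ++ [:: k.+1]).
  have h := iotaD 1 k 1; rewrite addn1 add1n in h.
  by rewrite -h.
have hio2 : \sum_(i <- iota 1 k) G i.+1 = \sum_(2 <= j < k.+2) G j.
  have -> : index_iota 2 k.+2 = iota 2 k by rewrite /index_iota subSS subSS subn0.
  by rewrite -[2%N]/(1 + 1)%N iotaDl big_map.
rewrite hio big_cons big_cat big_seq1 hio2 !mulrDr.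
have ha0 : mu (s e) != 0 by rewrite gt_eqF.
have hb0 : mu (t e) != 0 by rewrite gt_eqF.
have h1 : mu (t e) * (Num.sqrt (mu (s e) / mu (t e)) * G 1%N) =
    (if eps 1%N == op e then Num.sqrt (mu (t e) / mu (s e)) * Tr s t op mu (subword eps 2 k.+2) else 0).
  rewrite /G (subword_nil eps (i := 1) (j := 0)) // Ecoef_nil.
  case: ifP => hc; last by rewrite !mul0r !mulr0.
  rewrite (Tr_sub eps (i := 2) (j := k.+2)) // -(hloop 1%N) // (eqP hc) hts.
  rewrite (alg2 (hmu (s e)) (hmu (t e))); field; exact: ha0.
have h3 : mu (t e) * (Num.sqrt (mu (s e) / mu (t e)) * G k.+2) =
    (if eps k.+2 == op e then Num.sqrt (mu (s e) / mu (t e)) * Tr s t op mu (subword eps 1 k.+1) else 0).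
  rewrite /G (subword_nil eps (i := k.+3) (j := k.+2)) // Ecoef_nil.
  case: ifP => hc; last by rewrite !mul0r !mulr0.
  rewrite (Tr_sub eps (i := 1) (j := k.+1)) // hb1 /=; ring.
have h2 : mu (t e) * (Num.sqrt (mu (s e) / mu (t e)) * \sum_(2 <= j < k.+2) G j) =
    (Num.sqrt (mu (s e) * mu (t e)))^-1 *
    \sum_(2 <= j < k.+2 | eps j == op e)
      Tr s t op mu (subword eps 1 j.-1) * Tr s t op mu (subword eps j.+1 k.+2).
  rewrite !mulr_sumr [RHS]big_mkcond; apply: eq_big_nat => j /andP [hj1 hj2].
  rewrite /G; case: ifP => hc; last by rewrite !mul0r !mulr0.
  have hj0 : (1 <= j.-1)%N by case: j hj1 {hj2 hc} => [|[|j]].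
  rewrite (Tr_sub eps (i := 1) (j := j.-1)) // hb1 (Tr_sub eps (i := j.+1) (j := k.+2)) //.
  rewrite -(hloop j) ?(eqP hc) ?hts; last by rewrite (leq_trans _ hj1) //= (ltn_trans hj2).
  rewrite (alg1 (hmu (s e)) (hmu (t e))); field; exact: ha0.
rewrite h1 h2 h3; ring.
Qed.


End Fock.

Theorem lemma2p6 (R : realType) (V D : countType) (s t : D -> V) (op : D -> D)
    (mu : V -> R)
    (hG : directed_graph s t op) (hlf : locally_finite s)
    (hconn : graph_connected s t) (hmu : forall v, 0 < mu v)
    (n : nat) (eps : nat -> D) (hn : (3 <= n)%N)
    (hloop : forall k, (1 <= k < n)%N -> t (eps k) = s (eps k.+1))
    (hclose : t (eps n) = s (eps 1%N)) :
  let Tr := Tr s t op mu in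
  let a := s (eps n) in
  let b := t (eps n) in
  Tr (subword eps 1 n) =
    (Num.sqrt (mu a * mu b))^-1 *
      \sum_(2 <= j < n.-1 | eps j == op (eps n))
         Tr (subword eps 1 j.-1) * Tr (subword eps j.+1 n.-1)
  + (if eps n.-1 == op (eps n)
     then Num.sqrt (mu a / mu b) * Tr (subword eps 1 n.-2) else 0)
  + (if eps 1%N == op (eps n)
     then Num.sqrt (mu b / mu a) * Tr (subword eps 2 n.-1) else 0).
Proof.
case: n hn hloop hclose => [|[|[|k]]] // _ hl hc.
exact: (core hG hmu hl hc).
Qed.
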